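(* Let $n\ge 2$ be an integer and let $n=n_0+n_1$ with integers $n_0\ge n_1\ge 1$. Then $(n_0,n_1)$ is a hypercubic bipartition (HCBP) of $n$ if and only if $f(n)=n_1+f(n_1)+f(n_0)$.
   Context: Let $f:\mathbb{N}\to\mathbb{N}_0$ be defined by $f(1)=0$ and $f(n)=\lfloor n/2\rfloor+f(\lfloor n/2\rfloor)+f(\lceil n/2\rceil)$ for $n>1$. For $k\ge 0$ and $0\le m<2^k$, let $\beta_k(m)\in\{0,1\}^k$ be the point whose $j$-th coordinate is the binary digit of $m$ of weight $2^{k-j}$ (so the last binary digit of $m$ is the $k$-th coordinate). For $n\ge 2$ put $k=\lceil \log_2 n\rceil$. A pair $(n_0,n_1)$ of integers with $n=n_0+n_1$ and $n_0\ge n_1\ge 1$ is a hypercubic bipartition (HCBP) of $n$ if there is $i\in\{1,\dots,k\}$ such that the hyperplane $x_i=1/2$ splits the $n$ points $\beta_k(0),\dots,\beta_k(n-1)$ into $n_0$ points on one side and $n_1$ points on the other (i.e. among these points, $n_0$ have one value of the $i$-th coordinate and $n_1$ have the other). *)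

(* Defs.v *)
From mathcomp Require Import all_boot.
Set Implicit Arguments. Unset Strict Implicit. Unset Printing Implicit Defensive.

(* f : N -> N0 with f 1 = 0, f n = n/2 + f(floor(n/2)) + f(ceil(n/2)) for n > 1.
   Implemented by fuel; f_aux n n is the intended value (fuel n suffices since
   the arguments strictly decrease). f 0 is irrelevant (set to 0). *)
Fixpoint f_aux (fuel n : nat) : nat :=
  match fuel with
  | 0 => 0
  | fuel'.+1 =>
      if n <= 1 then 0
      else n./2 + f_aux fuel' n./2 + f_aux fuel' (uphalf n)
  end.

Definition f (n : nat) : nat := f_aux n n.

(* j-th coordinate (1 <= j <= k) of beta_k(m): binary digit of m of weight 2^(k-j). *)
Definition beta (k m j : nat) : bool := odd (m %/ 2 ^ (k - j)).

Definition count_side (k n j : nat) : nat :=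
  count (fun m => beta k m j) (iota 0 n).

Definition HCBP (n n0 n1 : nat) : Prop :=
  let k := up_log 2 n in
  exists2 j, (1 <= j <= k) &
    ((count_side k n j == n1) && (n - count_side k n j == n0)) ||
    ((count_side k n j == n0) && (n - count_side k n j == n1)).

(* Main.v *)
Require Import Defs.
From mathcomp Require Import all_boot zify.

Lemma f_aux_indep fu1 : forall fu2 n, n <= fu1 -> n <= fu2 -> f_aux fu1 n = f_aux fu2 n.
Proof.
elim: fu1 => [|F IH] [|F2] n h1 h2 /=.
- done.
- by have -> : n = 0 by lia.
- by have -> : n = 0 by lia.
- case: ifP => // hn.
  have h3 : n./2 <= F /\ uphalf n <= F /\ n./2 <= F2 /\ uphalf n <= F2.
    rewrite uphalf_half; move: (odd_double_half n) hn h1 h2; case: (odd n) => /=; lia.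
  by rewrite (IH F2) ?(IH F2 (uphalf n)) //; lia.
Qed.

Lemma f_unfold n : 1 < n -> f n = n./2 + f n./2 + f (uphalf n).
Proof.
move=> hn; rewrite /f; case: n hn => [|n] //= hn.
rewrite ifN; last by lia.
have h3 : n.+1./2 <= n /\ uphalf n.+1 <= n.
  rewrite uphalf_half; move: (odd_double_half n.+1) hn; case: (odd n.+1) => /=; lia.
by rewrite (@f_aux_indep n n.+1./2) ?(@f_aux_indep n (uphalf n.+1)) //; lia.
Qed.

Lemma f0 : f 0 = 0. Proof. by []. Qed.
Lemma f1 : f 1 = 0. Proof. by []. Qed.

Lemma f_even m : f (m.*2) = (f m).*2 + m.
Proof.
case: m => [|m]; first by [].
rewrite f_unfold; last by lia.
by rewrite uphalf_double doubleK; lia.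
Qed.

Lemma f_odd m : f (m.*2.+1) = f m + f m.+1 + m.
Proof.
case: m => [|m]; first by [].
rewrite f_unfold; last by lia.
by rewrite uphalf_half /= odd_double /= uphalf_double add1n; lia.
Qed.

Definition G a b := exists e, (2^e %| a \/ 2^e %| b) /\ a - b <= 2^e /\ b - a <= 2^e.

Lemma G_sym a b : G a b -> G b a.
Proof. by case=> e [[h|h] [h1 h2]]; exists e; split=> //; [right|left]. Qed.

Lemma G_near a b : a - b <= 1 -> b - a <= 1 -> G a b.
Proof. by move=> h1 h2; exists 0; rewrite expn0 dvd1n; split=> //; left. Qed.

Lemma G0 b : G 0 b.
Proof. exists b; rewrite dvdn0; split; first by left. by split; [lia| have := ltn_expl b (isT : 1 < 2); lia]. Qed.

Lemma G_double x y : G x.*2 y.*2 <-> G x y.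
Proof.
split.
- case=> [[|e]] [hd [h1 h2]].
  + by apply: G_near; move: h1 h2; rewrite expn0; lia.
  + exists e; rewrite expnS -!muln2 !(mulnC 2) !dvdn_pmul2r // in hd; split=> //.
    move: h1 h2; rewrite expnS; lia.
- case=> e [hd [h1 h2]]; exists e.+1; rewrite expnS -!muln2 !(mulnC 2) !dvdn_pmul2r //.
  by split=> //; lia.
Qed.

Lemma odd_not_dvd2 e z : 2^e.+1 %| z.*2.+1 -> False.
Proof.
move=> h; have : 2 %| z.*2.+1 by apply: dvdn_trans h; rewrite expnS dvdn_mulr.
by rewrite dvdn2 /= odd_double.
Qed.

Lemma G_oddodd x y : G x.*2.+1 y.*2.+1 <-> x = y.
Proof.
split.
- case=> [[|e]] [hd [h1 h2]].
  + move: h1 h2; rewrite expn0; lia.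
  + by case: hd => /odd_not_dvd2.
- by move=> ->; apply: G_near; lia.
Qed.

Lemma pow2_dvd_lt e1 e2 : 2^e1 < 2^e2 -> 2^e1 %| 2^e2.
Proof. by rewrite ltn_exp2l // => h; apply: dvdn_exp2l; apply: ltnW. Qed.

Lemma two_dvd_pow e : 2 <= 2^e -> 2 %| 2^e.
Proof. by case: e => [|e] //; rewrite expnS dvdn_mulr. Qed.

Lemma two_shift z w : z = w + 2 \/ w = z + 2 -> 2 %| w -> 2 %| z.
Proof. move=> h /dvdnP [t ht]; apply/dvdnP; exists (if z == w + 2 then t.+1 else t.-1); case: eqP; lia. Qed.

Lemma pow_dvd1 e z : 2^e %| z -> 2^e %| z + 1 -> 2^e = 1.
Proof. by move=> h1; rewrite dvdn_addr // dvdn1 => /eqP. Qed.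

Lemma G_evenodd x y : G x.*2 y.*2.+1 <-> G x y /\ G x y.+1.
Proof.
split.
- case=> [[|e]] [hd [h1 h2]].
  + by move: h1 h2; rewrite expn0 => h1 h2; split; apply: G_near; lia.
  + case: hd => hd; last by case: (@odd_not_dvd2 e y hd).
    rewrite expnS -!muln2 !(mulnC 2) dvdn_pmul2r // in hd.
    move: h1 h2; rewrite expnS => h1 h2.
    by split; exists e; split; try (by left); lia.
have key : forall e, 2^e %| x -> x - y <= 2^e -> y.+1 - x <= 2^e -> G x.*2 y.*2.+1.
  move=> e hd h1 h2; exists e.+1; rewrite expnS -!muln2 !(mulnC 2) dvdn_pmul2r //.
  by split; [left | lia].
have key1 : 2 %| x -> x - y <= 2 -> y.+1 - x <= 2 -> G x.*2 y.*2.+1.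
  by move=> *; apply: (key 1).
have key2 : x = y \/ x = y.+1 -> G x.*2 y.*2.+1 by move=> h; apply: G_near; lia.
move=> [[e1 [d1 [a1 b1]]] [e2 [d2 [a2 b2]]]].
have p1 := expn_gt0 2 e1; have p2 := expn_gt0 2 e2.
case: d1 => d1.
- case: (boolP (y.+1 - x <= 2^e1)) => h; first by apply: (key e1).
  case: d2 => d2; first by apply: (key e2) => //; lia.
  have hd : 2^e1 %| 2^e2 by apply: pow2_dvd_lt; lia.
  have h3 : 2^e1 %| y.+1 by apply: dvdn_trans d2.
  have h4 : 2^e1 = 1.
    move: h3; have -> : y.+1 = (x + 2^e1) + 1 by lia.
    by apply: (@pow_dvd1 _ (x + 2^e1)); rewrite // dvdn_add.
  apply: key1; try lia; apply: (@two_shift _ (y.+1)); first lia.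
  by apply: dvdn_trans d2; apply: two_dvd_pow; lia.
- case: d2 => d2.
  + case: (boolP (x - y <= 2^e2)) => h; first by apply: (key e2) => //; lia.
    have hd : 2^e2 %| 2^e1 by apply: pow2_dvd_lt; lia.
    have h3 : 2^e2 %| y by apply: dvdn_trans d1.
    have h4 : 2^e2 = 1.
      move: d2; have -> : x = (y + 2^e2) + 1 by lia.
      by apply: (@pow_dvd1 _ (y + 2^e2)); rewrite // dvdn_add.
    apply: key1; try lia; apply: (@two_shift _ (y)); first lia.
    by apply: dvdn_trans d1; apply: two_dvd_pow; lia.
  + case: (boolP (2 <= 2^e1)) => q1; case: (boolP (2 <= 2^e2)) => q2.
    * have : 2 %| y by apply: dvdn_trans d1; apply: two_dvd_pow.
      have : 2 %| y.+1 by apply: dvdn_trans d2; apply: two_dvd_pow.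
      by rewrite !dvdn2 /= negbK => ->.
    * case: (boolP (x == y.+2)) => /eqP hx; last by apply: key2; lia.
      apply: key1; try lia; apply: (@two_shift _ (y)); first lia.
      by apply: dvdn_trans d1; apply: two_dvd_pow.
    * case: (boolP (y == x.+1)) => /eqP hx; last by apply: key2; lia.
      apply: key1; try lia; apply: (@two_shift _ (y.+1)); first lia.
      by apply: dvdn_trans d2; apply: two_dvd_pow.
    * case: (boolP (y == x.+1)) => /eqP hx; last by apply: key2; lia.
      lia.
Qed.

Definition Q a b := f a + f b + minn a b <= f (a+b) /\ (f (a+b) = f a + f b + minn a b <-> G a b).

Lemma Q_sym a b : Q a b -> Q b a.
Proof.
case=> h1 h2; split; first by rewrite [b + a]addnC minnC; lia.
rewrite [b + a]addnC minnC; split.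
- by move=> h; apply: G_sym; apply/h2; lia.
- by move/G_sym/h2; lia.
Qed.

Lemma Q_main s : forall a b, a + b = s -> Q a b.
Proof.
elim/ltn_ind: s => s IH a b hs.
have Q0 : forall b, Q 0 b.
  move=> c; rewrite /Q f0 min0n !add0n addn0; split=> //; split=> // _; apply: G0.
have ev_od : forall x y, 0 < x -> x.*2 + y.*2.+1 = s -> Q x.*2 y.*2.+1.
  move=> x y hx hxy.
  have [l1 e1] := IH (x + y) ltac:(lia) x y erefl.
  have [l2 e2] := IH (x + y.+1) ltac:(lia) x y.+1 erefl.
  have hf : f (x.*2 + y.*2.+1) = f (x+y) + f (x+y).+1 + (x+y).
    by rewrite addnS -doubleD f_odd.
  rewrite /Q hf f_even f_odd.
  rewrite addnS in l2 e2; split; first lia.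
  rewrite G_evenodd; split.
  + by move=> h; split; [apply/e1 | apply/e2]; lia.
  + by case=> /e1 h1 /e2 h2; lia.
move: (odd_double_half a) (odd_double_half b).
set x := a./2; set y := b./2; clearbody x y.
case: (odd a) => /= ha; case: (odd b) => /= hb; rewrite -ha -hb.
-
  have [l1 e1] := IH (x.+1 + y) ltac:(lia) x.+1 y erefl.
  have [l2 e2] := IH (x + y.+1) ltac:(lia) x y.+1 erefl.
  have hf : f (x.*2.+1 + y.*2.+1) = (f (x+y).+1).*2 + (x + y).+1.
    by rewrite addSn addnS -doubleD -doubleS f_even.
  rewrite /Q hf !f_odd G_oddodd.
  rewrite addSn in l1 e1; rewrite addnS in l2 e2; split; first lia.
  split.
  + case: (ltngtP x y) => // hxy; lia.
  + move=> hxy; subst y.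
    have g1 := proj2 e1 (@G_near x.+1 x ltac:(lia) ltac:(lia)).
    have g2 := proj2 e2 (@G_near x x.+1 ltac:(lia) ltac:(lia)).
    lia.
-
  case: (posnP y) => hy.
  + rewrite hy /=; apply: Q_sym; apply: Q0.
  + apply: Q_sym; apply: ev_od => //; lia.
- case: (posnP x) => hx; first by rewrite hx; apply: Q0.
  by apply: ev_od => //; lia.
- case: (posnP x) => hx; first by rewrite hx; apply: Q0.
  have [l1 e1] := IH (x + y) ltac:(lia) x y erefl.
  rewrite /Q -doubleD !f_even G_double.
  split; first lia.
  by rewrite -e1; lia.
Qed.

Definition cnt P n := count (fun m => odd (m %/ P)) (iota 0 n).

Lemma uniq_div P q r : r < P.*2 -> ((q*P).*2 + r) %/ P.*2 = q /\ ((q*P).*2 + r) %% P.*2 = r.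
Proof.
move=> hr; have hP : 0 < P.*2 by lia.
rewrite doubleMr divnMDl // divn_small // addn0; split=> //.
by rewrite modnMDl modn_small.
Qed.

Lemma odd_div P m : 0 < P -> odd (m %/ P) = (P <= m %% P.*2).
Proof.
move=> hP; have h : (odd (m %/ P) : nat) = m %% P.*2 %/ P by rewrite -modn2 modn_divl -mul2n.
have hr : m %% P.*2 < P.*2 by rewrite ltn_pmod //; lia.
move: h hr; set r := m %% P.*2; clearbody r => h hr; move: h; case: (ltnP r P) => h2.
- by rewrite (divn_small h2); case: (odd _).
- have -> : r = 1 * P + (r - P) by lia.
  rewrite divnMDl // (@divn_small (r - P) P); last by lia.
  by case: (odd _).
Qed.

Lemma cnt_formula P n : 0 < P -> cnt P n = n %/ P.*2 * P + (n %% P.*2 - P).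
Proof.
move=> hP; elim: n => [|n IH]; first by rewrite div0n mod0n.
rewrite /cnt -addn1 iotaD count_cat /= add0n addn0 -/(cnt P n) IH odd_div //.
have hr : n %% P.*2 < P.*2 by rewrite ltn_pmod //; lia.
have hn := divn_eq n P.*2.
move: hr hn; set q := n %/ P.*2; set r := n %% P.*2; clearbody q r => hr hn.
have hn' : n = (q*P).*2 + r by rewrite hn -doubleMr.
case: (ltnP r.+1 P.*2) => h.
- have -> : n + 1 = (q*P).*2 + r.+1 by lia.
  have [-> ->] := @uniq_div P q r.+1 h.
  case: (leqP P r) => /= h3; lia.
- have -> : n + 1 = (q.+1*P).*2 + 0 by rewrite mulSn; lia.
  have [-> ->] := @uniq_div P q.+1 0 ltac:(lia).
  rewrite mulSn; case: (leqP P r) => /= h3; lia.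
Qed.

Lemma cnt_min P A B : 0 < P -> P %| A -> A - B <= P -> B - A <= P -> cnt P (A+B) = minn A B.
Proof.
move=> hP /dvdnP [t ->] h1 h2; rewrite cnt_formula //.
case: (leqP (t*P) B) => h.
- have -> : t*P + B = (t*P).*2 + (B - t*P) by lia.
  have [-> ->] := @uniq_div P t (B - t*P) ltac:(lia).
  lia.
- case: t h h1 h2 => [|t] h h1 h2; first by rewrite mul0n in h.
  have -> : t.+1*P + B = (t*P).*2 + (P.*2 - (t.+1*P - B)) by rewrite mulSn in h h1 h2 *; lia.
  have [-> ->] := @uniq_div P t (P.*2 - (t.+1*P - B)) ltac:(lia).
  rewrite mulSn in h h1 h2 *; lia.
Qed.

Lemma HCBP_G n n0 n1 : 2 <= n -> n = n0 + n1 -> n1 <= n0 -> 1 <= n1 ->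
  (HCBP n n0 n1 <-> G n0 n1).
Proof.
move=> hn hs h01 h1; rewrite /HCBP.
set k := up_log 2 n.
have hk : n <= 2^k by apply: up_logP.
split.
- case=> j _ hc; rewrite /count_side -/(cnt _ _) in hc.
  set P := 2^(k-j) in hc.
  have hP : 0 < P by rewrite expn_gt0.
  move: hc; rewrite cnt_formula //.
  have hr : n %% P.*2 < P.*2 by rewrite ltn_pmod //; lia.
  have hn0 := divn_eq n P.*2.
  move: hr hn0; set q := n %/ P.*2; set r := n %% P.*2; clearbody q r => hr hn0.
  have hn' : n = (q*P).*2 + r by rewrite hn0 -doubleMr.
  set c := q * P + (r - P).
  have hdiv : P %| c \/ P %| n - c.
    case: (ltnP r P) => h.
    - by left; rewrite /c (_ : r - P = 0) ?addn0 ?dvdn_mull //; lia.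
    - right; rewrite (_ : n - c = q.+1 * P); first by apply: dvdn_mull.
      rewrite mulSn /c; lia.
  have hc1 : c <= n by rewrite /c; lia.
  have hd1 : n - c - c <= P by rewrite /c; lia.
  have hd2 : c - (n - c) <= P by rewrite /c; lia.
  clearbody c.
  case/orP=> /andP [/eqP e1 /eqP e2]; exists (k - j); rewrite -/P.
  + split; last lia.
    by rewrite -e1 -e2; case: hdiv => h; [right|left].
  + split; last lia.
    by rewrite -e1 -e2; case: hdiv => h; [left|right].
- case=> e [hd [d1 d2]].
  have hP : 0 < 2^e by rewrite expn_gt0.
  have hek : e < k.
    rewrite -(@ltn_exp2l 2) //.
    case: hd => hd; have := dvdn_leq _ hd; lia.
  exists (k - e); first by apply/andP; split; lia.
  rewrite /count_side -/(cnt _ _) subKn; last by lia.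
  have -> : cnt (2^e) n = n1.
    case: hd => hd.
    + by rewrite hs cnt_min //; lia.
    + by rewrite hs addnC cnt_min //; lia.
  by rewrite eqxx /=; apply/orP; left; apply/eqP; lia.
Qed.

Theorem theorem6 (n n0 n1 : nat) :
  2 <= n -> n = n0 + n1 -> n1 <= n0 -> 1 <= n1 ->
  (HCBP n n0 n1 <-> f n = n1 + f n1 + f n0).
Proof.
move=> hn hs h01 h1; rewrite HCBP_G //.
have [_ hq] := @Q_main (n1 + n0) n1 n0 erefl.
have hm : minn n1 n0 = n1 by lia.
rewrite hm in hq.
have hs' : n = n1 + n0 by lia.
rewrite hs'; split.
- by move/G_sym/hq; lia.
- by move=> h; apply: G_sym; apply/hq; lia.
Qed.
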